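(* For every $(\overline{u}_{T,k+1/2})_{k=1}^4\in\mathbb{R}^4$ and every saturations $S_1,\dots,S_4$, the interfacial mobility ratios $\overline{\boldsymbol{\chi}}_\ell=\boldsymbol{A}^{-1}\boldsymbol{B}\boldsymbol{\chi}_\ell$ are well defined, and for every $k\in\{1,\dots,4\}$, $$\overline{V}_{w,k+1/2}+\overline{V}_{\textit{nw},k+1/2}=\overline{u}_{T,k+1/2}.$$
   Context: Indices in $\{1,2,3,4\}$ are cyclic mod 4. Two phases $w,\textit{nw}$ with mobilities $\lambda_w,\lambda_{\textit{nw}}\ge0$ (functions of the wetting saturation $S$) with $\lambda_T=\lambda_w+\lambda_{\textit{nw}}>0$; $\chi_{\ell,k}=\lambda_\ell(S_k)/\lambda_T(S_k)$ and $\boldsymbol{\chi}_\ell=(\chi_{\ell,1},\dots,\chi_{\ell,4})^T$. Limiter $\varphi(r)=\dfrac{r^4+r^3+r^2+r}{r^4+r^3+r^2+r+1}$, $r\ge0$. $\overline{\omega}^V_{k+1/2}=\varphi(\max(0,\overline{u}_{T,k-1/2}/\overline{u}_{T,k+1/2}))$ if $\overline{u}_{T,k+1/2}>0$, $=\varphi(\max(0,\overline{u}_{T,k+3/2}/\overline{u}_{T,k+1/2}))$ if $\overline{u}_{T,k+1/2}<0$, $=0$ otherwise. $\boldsymbol{A}$: $a_{kk}=1$, $a_{k,k-1}=-\overline{\omega}^V_{k+1/2}$ if $\overline{u}_{T,k+1/2}\ge0$ (else $0$), $a_{k,k+1}=-\overline{\omega}^V_{k+1/2}$ if $\overline{u}_{T,k+1/2}<0$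 (else $0$), other entries $0$. $\boldsymbol{B}$: $b_{kk}=1-\overline{\omega}^V_{k+1/2}$ if $\overline{u}_{T,k+1/2}\ge0$ (else $0$), $b_{k,k+1}=1-\overline{\omega}^V_{k+1/2}$ if $\overline{u}_{T,k+1/2}<0$ (else $0$), other entries $0$. $\overline{\chi}_{\ell,k+1/2}$ is the $k$-th entry of $\overline{\boldsymbol{\chi}}_\ell$, and the viscous flux is $\overline{V}_{\ell,k+1/2}=\overline{\chi}_{\ell,k+1/2}\overline{u}_{T,k+1/2}$. *)

(* Defs.v *)
(* the statement is purely algebraic/order-theoretic, so it is
   stated over an arbitrary real field R (which includes the reals). *)
From HB Require Import structures.
From mathcomp Require Import all_boot all_order all_algebra.
Set Implicit Arguments. Unset Strict Implicit. Unset Printing Implicit Defensive.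
Import Order.TTheory GRing.Theory Num.Theory.
Local Open Scope ring_scope.

(* Cells/interfaces are indexed by 'I_4; index k : 'I_4 stands for cell k+1
   and interface k+1/2 (i.e. between cells k+1 and k+2, 1-based).
   Cyclic neighbours: ord_pred k = k-1 mod 4, ordS k = k+1 mod 4. *)

Definition phi (R : realFieldType) (r : R) : R :=
  (r ^+ 4 + r ^+ 3 + r ^+ 2 + r) / (r ^+ 4 + r ^+ 3 + r ^+ 2 + r + 1).

(* omegabar^V_{k+1/2}, with u k = ubar_{T,k+1/2}. *)
Definition omegaV (R : realFieldType) (u : 'I_4 -> R) (k : 'I_4) : R :=
  if 0 < u k then phi (Num.max 0 (u (ord_pred k) / u k))
  else if u k < 0 then phi (Num.max 0 (u (ordS k) / u k))
  else 0.

Definition matA (R : realFieldType) (u : 'I_4 -> R) : 'M[R]_4 :=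
  \matrix_(i, j)
    (if j == i then 1
     else if (j == ord_pred i) && (0 <= u i) then - omegaV u i
     else if (j == ordS i) && (u i < 0) then - omegaV u i
     else 0).

Definition matB (R : realFieldType) (u : 'I_4 -> R) : 'M[R]_4 :=
  \matrix_(i, j)
    (if (j == i) && (0 <= u i) then 1 - omegaV u i
     else if (j == ordS i) && (u i < 0) then 1 - omegaV u i
     else 0).

Definition chi (R : realFieldType) (lam lamw lamnw : R -> R) (S : 'I_4 -> R)
  : 'cV[R]_4 :=
  \col_k (lam (S k) / (lamw (S k) + lamnw (S k))).

Definition chibar (R : realFieldType) (u : 'I_4 -> R) (chil : 'cV[R]_4)
  : 'cV[R]_4 :=
  invmx (matA u) *m (matB u *m chil).

Definition Vbar (R : realFieldType) (u : 'I_4 -> R) (chil : 'cV[R]_4)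
  (k : 'I_4) : R :=
  chibar u chil k ord0 * u k.

(* Main.v *)
Require Import Defs.
From HB Require Import structures.
From mathcomp Require Import all_boot all_order all_algebra.
From mathcomp Require Import lra.
Import Order.TTheory GRing.Theory Num.Theory.
Local Open Scope ring_scope.

Section Aux.
Variable R : realFieldType.

Lemma phi_bounds (r : R) : 0 <= r -> 0 <= phi r < 1.
Proof.
move=> r0; rewrite /phi.
set p := r ^+ 4 + r ^+ 3 + r ^+ 2 + r.
have p0 : 0 <= p by rewrite /p !addr_ge0 // exprn_ge0.
have q0 : 0 < p + 1 by rewrite ltr_wpDl.
rewrite divr_ge0 ?(ltW q0) //= ltr_pdivrMr // mul1r ltrDl //.
Qed.

Lemma omega_bounds (u : 'I_4 -> R) i : 0 <= omegaV u i < 1.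
Proof.
rewrite /omegaV; case: ifP => _; first by apply: phi_bounds; rewrite le_max lexx.
case: ifP => _; first by apply: phi_bounds; rewrite le_max lexx.
by rewrite lexx ltr01.
Qed.

Lemma ord_pred_neq (i : 'I_4) : ord_pred i != i.
Proof. by case: i => [[|[|[|[|?]]]] ?]. Qed.
Lemma ordS_neq (i : 'I_4) : ordS i != i.
Proof. by case: i => [[|[|[|[|?]]]] ?]. Qed.

Definition nb (u : 'I_4 -> R) i := if 0 <= u i then ord_pred i else ordS i.

Lemma nb_neq u i : nb u i != i.
Proof. rewrite /nb; case: ifP => _; [exact: ord_pred_neq | exact: ordS_neq]. Qed.

Lemma matA_mul u (x : 'cV[R]_4) i :
  (matA u *m x) i 0 = x i 0 - omegaV u i * x (nb u i) 0.
Proof.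
rewrite !mxE (bigD1 i) //= (bigD1 (nb u i)) /=; last by rewrite nb_neq.
rewrite big1 ?addr0.
  rewrite !mxE eqxx mul1r ifN; last exact: nb_neq. rewrite /nb.
  case: (leP 0 (u i)) => h; first by rewrite eqxx mulNr.
  by rewrite andbF eqxx mulNr.
move=> j /andP [ji jn]; rewrite mxE (negbTE ji).
move: jn; rewrite /nb; case: (leP 0 (u i)) => h jn.
  by rewrite (negbTE jn) /= andbF mul0r.
by rewrite andbF (negbTE jn) mul0r.
Qed.

Lemma matB_one u i :
  (matB u *m (const_mx 1 : 'cV[R]_4)) i 0 = 1 - omegaV u i.
Proof.
rewrite !mxE.
case h: (0 <= u i).
  rewrite (bigD1 i) //= big1 ?addr0; first by rewrite !mxE eqxx h mulr1.
  move=> j ji; rewrite !mxE (negbTE ji) /= ltNge h andbF mul0r //.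
rewrite (bigD1 (ordS i)) //= big1 ?addr0.
  by rewrite !mxE eqxx (negbTE (ordS_neq i)) ltNge h mulr1.
move=> j ji; rewrite !mxE (negbTE ji) h !andbF mul0r //.
Qed.

Lemma kerA u (x : 'cV[R]_4) : matA u *m x = 0 -> x = 0.
Proof.
move=> hx.
have e i : x i 0 = omegaV u i * x (nb u i) 0.
  by apply/eqP; rewrite -subr_eq0 -matA_mul hx mxE.
case: (@arg_maxP _ _ _ ord0 xpredT (fun i => `|x i 0|) isT) => m _ hm.
have hm0 : `|x m 0| = 0.
  have /andP [w0 w1] := omega_bounds u m.
  have H : `|x m 0| <= omegaV u m * `|x m 0|.
    rewrite {1}e normrM ger0_norm //; apply: ler_wpM2l => //; exact: hm.
  have := normr_ge0 (x m 0). nra.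
apply/matrixP => i j; rewrite (ord1 j) mxE.
apply/eqP; rewrite -normr_eq0 eq_le normr_ge0 andbT -hm0; exact: hm.
Qed.

End Aux.

Theorem mainTheorem3 (R : realFieldType) (lamw lamnw : R -> R)
  (hw : forall s, 0 <= lamw s) (hnw : forall s, 0 <= lamnw s)
  (hT : forall s, 0 < lamw s + lamnw s)
  (u : 'I_4 -> R) (S : 'I_4 -> R) :
  matA u \in unitmx /\
  (forall k : 'I_4,
     Vbar u (chi lamw lamw lamnw S) k + Vbar u (chi lamnw lamw lamnw S) k = u k).
Proof.
have hU : matA u \in unitmx.
  rewrite -unitmx_tr -row_free_unit -kermx_eq0.
  apply/eqP/row_matrixP => r; rewrite row0.
  set v := row r _.
  have hv : v *m (matA u)^T = 0 by apply/sub_kermxP; exact: row_sub.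
  have : matA u *m v^T = 0 by apply: trmx_inj; rewrite trmx_mul trmxK hv trmx0.
  by move/kerA => h; apply: trmx_inj; rewrite h trmx0.
split=> // k.
have hc : chi lamw lamw lamnw S + chi lamnw lamw lamnw S = const_mx 1.
  apply/matrixP => i j; rewrite !mxE -mulrDl divff //.
  exact: lt0r_neq0.
have hBA : matB u *m (const_mx 1 : 'cV[R]_4) = matA u *m const_mx 1.
  apply/matrixP => i j; rewrite (ord1 j) matB_one matA_mul !mxE mulr1 //.
rewrite /Vbar -mulrDl /chibar.
have -> : forall a b : 'cV[R]_4, a k ord0 + b k ord0 = (a + b) k ord0 by move=> a b; rewrite mxE.
by rewrite -mulmxDr -mulmxDr hc hBA mulKmx // mxE mul1r.
Qed.
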